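(* Let $\Omega$ be a singular verification operator for $|\Psi\rangle$ (i.e. its smallest eigenvalue is $0$) with second largest eigenvalue $\beta$, let $N\ge1$ be an integer, $\delta^*=\frac{1+N\beta}{N+1}$, and $1/(N+1)\le\delta\le\delta^*$. Then $$F(N,\delta,\Omega)\le1-\frac{1}{(N+1)\delta}.$$
   Context: Let $\mathcal H$ be a Hilbert space of finite dimension $D\ge2$ and $|\Psi\rangle\in\mathcal H$ a unit vector. A verification operator for $|\Psi\rangle$ is a Hermitian operator $\Omega$ on $\mathcal H$ with $0\le\Omega\le1$, $\Omega|\Psi\rangle=|\Psi\rangle$, whose eigenvalue $1$ is nondegenerate. For a density operator $\rho$ on $\mathcal H^{\otimes(N+1)}$ put $p_\rho=\mathrm{tr}[(\Omega^{\otimes N}\otimes1)\rho]$, $f_\rho=\mathrm{tr}[(\Omega^{\otimes N}\otimes|\Psi\rangle\langle\Psi|)\rho]$, and $F(N,\delta,\Omega)=\min\{f_\rho/p_\rho:p_\rho\ge\delta\}$, the minimum over permutation-invariant density operators on $\mathcal H^{\otimes(N+1)}$. *)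

(* Defs.v *)
From HB Require Import structures.
From mathcomp Require Import all_boot all_order all_algebra.
From mathcomp Require Import perm complex.
From mathcomp Require Import boolp classical_sets reals.

Set Implicit Arguments.
Unset Strict Implicit.
Unset Printing Implicit Defensive.

Import Order.TTheory GRing.Theory Num.Theory.
Local Open Scope ring_scope.

(* Scalars: complex numbers R[i] over an arbitrary real number field R : realType.
   The Hilbert space H = C^D; vectors are column vectors 'cV_D, operators 'M_D. *)

Section QDefs.
Variable R : realType.
Local Notation C := (R[i]).

Definition RtoC (x : R) : C := (x%:C)%C.

Definition adj m n (A : 'M[C]_(m, n)) : 'M[C]_(n, m) := (map_mx Num.conj A)^T.

Definition hermitian n (A : 'M[C]_n) : Prop := adj A = A.

Definition psd n (A : 'M[C]_n) : Prop :=
  hermitian A /\ forall v : 'cV[C]_n, 0 <= (adj v *m A *m v) 0 0.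

Definition loewner_le n (A B : 'M[C]_n) : Prop := psd (B - A).

Definition density n (rho : 'M[C]_n) : Prop := psd rho /\ \tr rho = 1.

Definition verification_operator D (Om : 'M[C]_D) (psi : 'cV[C]_D) : Prop :=
  [/\ hermitian Om, loewner_le 0 Om, loewner_le Om 1,
      Om *m psi = psi &
      \rank (eigenspace Om 1) = 1%N].

Definition unit_vector D (psi : 'cV[C]_D) : Prop := (adj psi *m psi) 0 0 = 1.

(* Basis of H^{(x) n}: functions 'I_n -> 'I_D (the k-th tensor factor in basis
   state x k).  Operators on H^{(x) n} are matrices indexed by this finite
   type, through its enumeration. *)
Definition tidx D n := {ffun 'I_n -> 'I_D}.
Definition tdim D n := #|tidx D n|.

Definition tprod D n (A : 'I_n -> 'M[C]_D) : 'M[C]_(tdim D n) :=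
  \matrix_(i, j) \prod_(k < n)
     A k ((enum_val i : tidx D n) k) ((enum_val j : tidx D n) k).

Definition tperm_op D n (s : 'S_n) : 'M[C]_(tdim D n) :=
  \matrix_(i, j)
     ((enum_val i : tidx D n) == [ffun k => (enum_val j : tidx D n) (s k)])%:R.

Definition perm_invariant D n (rho : 'M[C]_(tdim D n)) : Prop :=
  forall s : 'S_n, tperm_op D s *m rho *m adj (tperm_op D s) = rho.

Definition OmN_tens D N (Om B : 'M[C]_D) : 'M[C]_(tdim D N.+1) :=
  tprod (fun k : 'I_(N.+1) => if (k < N)%N then Om else B).

Definition p_rho D N (Om : 'M[C]_D) (rho : 'M[C]_(tdim D N.+1)) : C :=
  \tr (OmN_tens N Om 1 *m rho).

Definition f_rho D N (Om : 'M[C]_D) (psi : 'cV[C]_D) (rho : 'M[C]_(tdim D N.+1)) : C :=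
  \tr (OmN_tens N Om (psi *m adj psi) *m rho).

(* F(N, delta, Omega): the minimum (= infimum; the feasible set is compact)
   of f_rho / p_rho over permutation-invariant density operators rho on
   H^{(x)(N+1)} with p_rho >= delta. *)
Arguments p_rho {D} N Om rho.
Arguments f_rho {D} N Om psi rho.

Definition Fval D N (delta : R) (Om : 'M[C]_D) (psi : 'cV[C]_D) : R :=
  inf [set x : R | exists rho : 'M[C]_(tdim D N.+1),
        [/\ density rho, perm_invariant rho,
            RtoC delta <= p_rho N Om rho &
            RtoC x = f_rho N Om psi rho / p_rho N Om rho]].

End QDefs.

Arguments Fval {R D} N delta Om psi.

(* Main.v *)
Require Import Defs.
From HB Require Import structures.
From mathcomp Require Import all_boot all_order all_algebra.
From mathcomp Require Import complex.
From mathcomp Require Import boolp classical_sets reals.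
From mathcomp Require Import perm ring.
Import Order.TTheory GRing.Theory Num.Theory.
Local Open Scope ring_scope.

Module Helpers.
Set Implicit Arguments.
Unset Strict Implicit.
Unset Printing Implicit Defensive.
Section H.
Variable R : realType.
Local Notation C := (R[i]).

Lemma sum_tidx D n (F : tidx D n -> C) :
  \sum_(i < tdim D n) F (enum_val i) = \sum_(x : tidx D n) F x.
Proof.
rewrite (reindex (@enum_val (tidx D n) predT)) //=.
by apply: onW_bij; exact: enum_val_bij.
Qed.

Lemma tprodM D n (A B : 'I_n -> 'M[C]_D) :
  tprod A *m tprod B = tprod (fun k => A k *m B k).
Proof.
apply/matrixP => i j; rewrite !mxE.
under eq_bigr do rewrite !mxE -big_split /=.
rewrite (sum_tidx (fun x => \prod_(k < n) (A k (enum_val i k) (x k) * B k (x k) (enum_val j k)))).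
under [RHS]eq_bigr do rewrite mxE.
by rewrite bigA_distr_bigA.
Qed.

Lemma tprod_tr D n (A : 'I_n -> 'M[C]_D) :
  \tr (tprod A) = \prod_k \tr (A k).
Proof.
transitivity (\sum_(i < tdim D n) \prod_k A k (enum_val i k) (enum_val i k)).
  by apply: eq_bigr => i _; rewrite mxE.
rewrite (sum_tidx (fun x => \prod_(k < n) A k (x k) (x k))).
by rewrite bigA_distr_bigA.
Qed.

Lemma adjE m n (A : 'M[C]_(m, n)) i j : adj A i j = (A j i)^*.
Proof. by rewrite !mxE. Qed.

Lemma adj_mul m n p (A : 'M[C]_(m, n)) (B : 'M[C]_(n, p)) :
  adj (A *m B) = adj B *m adj A.
Proof. by rewrite /adj map_mxM trmx_mul. Qed.

Lemma adjK m n (A : 'M[C]_(m, n)) : adj (adj A) = A.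
Proof. by apply/matrixP => i j; rewrite !adjE conjCK. Qed.

Lemma adjD m n (A B : 'M[C]_(m, n)) : adj (A + B) = adj A + adj B.
Proof. by apply/matrixP => i j; rewrite !mxE rmorphD. Qed.

Lemma adjZ m n c (A : 'M[C]_(m, n)) : adj (c *: A) = c^* *: adj A.
Proof. by apply/matrixP => i j; rewrite !mxE rmorphM. Qed.

Lemma adj_sum m n I (r : seq I) (F : I -> 'M[C]_(m, n)) :
  adj (\sum_(i <- r) F i) = \sum_(i <- r) adj (F i).
Proof.
elim: r => [|x r IH]; first by rewrite !big_nil; by apply/matrixP => i j; rewrite !mxE conjC0.
by rewrite !big_cons adjD IH.
Qed.

Definition tvec D n (u : 'I_n -> 'cV[C]_D) : 'cV[C]_(tdim D n) :=
  \col_i \prod_k u k ((enum_val i : tidx D n) k) 0.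

Lemma tprod_rank1 D n (u : 'I_n -> 'cV[C]_D) :
  tprod (fun k => u k *m adj (u k)) = tvec u *m adj (tvec u).
Proof.
apply/matrixP => i j; rewrite !mxE big_ord1 !mxE.
rewrite rmorph_prod -big_split /=; apply: eq_bigr => k _.
by rewrite !mxE big_ord1 !mxE.
Qed.

Lemma psd_add n (A B : 'M[C]_n) : psd A -> psd B -> psd (A + B).
Proof.
move=> [hA qA] [hB qB]; split; first by rewrite /Defs.hermitian adjD hA hB.
move=> v; rewrite mulmxDr. rewrite mulmxDl. rewrite [X in 0 <= X]mxE. by rewrite addr_ge0.
Qed.

Lemma psd_scale n c (A : 'M[C]_n) : 0 <= c -> psd A -> psd (c *: A).
Proof.
move=> c0 [hA qA]; split.
  by rewrite /Defs.hermitian adjZ hA; congr (_ *: _); apply/CrealP; apply: ger0_real.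
by move=> v; rewrite -scalemxAr -scalemxAl mxE mulr_ge0.
Qed.

Lemma psd_sum n I (r : seq I) (F : I -> 'M[C]_n) :
  (forall i, psd (F i)) -> psd (\sum_(i <- r) F i).
Proof.
move=> H; elim: r => [|x r IH].
  rewrite big_nil; split; first by by apply/matrixP => i j; rewrite !mxE conjC0.
  by move=> v; rewrite mulmx0 mul0mx mxE.
by rewrite big_cons; apply: psd_add.
Qed.

Lemma psd_rank1 n (w : 'cV[C]_n) : psd (w *m adj w).
Proof.
split; first by rewrite /Defs.hermitian adj_mul adjK.
move=> v; rewrite !mulmxA -mulmxA.
have -> : adj w *m v = adj (adj v *m w) by rewrite adj_mul adjK.
rewrite [X in (_ *m X) 0 0]mx11_scalar (mx11_scalar (adj v *m w)) adjE.
by rewrite -scalar_mxM mxE mulr1n !mxE eqxx mulr1n mul_conjC_ge0.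
Qed.

Section Perm.
Variables (D n : nat) (s : 'S_n).
Definition gi (f : tidx D n) : tidx D n := [ffun k => f ((s^-1)%g k)].
Definition a0 (i : 'I_(tdim D n)) : 'I_(tdim D n) :=
  enum_rank (gi (enum_val i : tidx D n)).

Lemma tpermE i a : tperm_op R D s i a = (a == a0 i)%:R :> C.
Proof.
rewrite mxE; congr ((nat_of_bool _)%:R); rewrite /a0.
rewrite -(inj_eq (@enum_val_inj _ _)) enum_rankK.
apply/idP/idP => /eqP E; apply/eqP.
  by rewrite E; apply/ffunP => k; rewrite !ffunE permKV.
by rewrite E; apply/ffunP => k; rewrite !ffunE permK.
Qed.

Lemma tperm_conj (M : 'M[C]_(tdim D n)) i j :
  (tperm_op R D s *m M *m adj (tperm_op R D s)) i j = M (a0 i) (a0 j).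
Proof.
rewrite mxE (bigD1 (a0 j)) //= big1 ?addr0; last first.
  by move=> b /negbTE hb; rewrite adjE tpermE hb conjC0 mulr0.
rewrite adjE tpermE eqxx conjC1 mulr1 mxE (bigD1 (a0 i)) //= big1 ?addr0.
  by rewrite tpermE eqxx mul1r.
by move=> b /negbTE hb; rewrite tpermE hb mul0r.
Qed.

Lemma tperm_tprod (A : 'I_n -> 'M[C]_D) :
  tperm_op R D s *m tprod A *m adj (tperm_op R D s) = tprod (fun k => A (s k)).
Proof.
apply/matrixP => i j; rewrite tperm_conj !mxE /a0 !enum_rankK.
rewrite (reindex_inj (@perm_inj _ s)) /=; apply: eq_bigr => k _.
by rewrite !ffunE permK.
Qed.
End Perm.

Definition q D (M : 'M[C]_D) (u : 'cV[C]_D) := (adj u *m M *m u) 0 0.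

Lemma mx11M (X Y : 'M[C]_1) : (X *m Y) 0 0 = X 0 0 * Y 0 0.
Proof. by rewrite mxE big_ord1. Qed.

Lemma tr_rank1 D (B : 'M[C]_D) (u : 'cV[C]_D) : \tr (B *m (u *m adj u)) = q B u.
Proof. by rewrite mulmxA mxtrace_mulC trace_mx11 /q mulmxA. Qed.

Lemma tr_tprod_rank1 D n (B : 'I_n -> 'M[C]_D) (u : 'I_n -> 'cV[C]_D) :
  \tr (tprod B *m tprod (fun k => u k *m adj (u k))) = \prod_k q (B k) (u k).
Proof. by rewrite tprodM tprod_tr; apply: eq_bigr => k _; rewrite tr_rank1. Qed.

Section Main.
Variables (D N : nat) (psi : 'cV[C]_D) (Om : 'M[C]_D).
Hypothesis hpsi : (adj psi *m psi) 0 0 = 1.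
Hypothesis hOm : Om *m psi = psi.
Hypothesis hherm : adj Om = Om.

Definition uu (phi : 'cV[C]_D) (j k : 'I_N.+1) := if k == j then phi else psi.
Definition PP phi j := tprod (fun k => uu phi j k *m adj (uu phi j k)).
Definition SS phi := \sum_(j < N.+1) PP phi j.

Lemma q_psi_Om : q Om psi = 1. Proof. by rewrite /q -mulmxA hOm. Qed.
Lemma q_psi_1 : q 1 psi = 1. Proof. by rewrite /q mulmx1. Qed.
Lemma q_psi_P : q (psi *m adj psi) psi = 1.
Proof. by rewrite /q mulmxA -mulmxA mx11M hpsi mulr1. Qed.

Lemma tr_PP (B : 'I_N.+1 -> 'M[C]_D) phi j :
  (forall k, q (B k) psi = 1) -> \tr (tprod B *m PP phi j) = q (B j) phi.
Proof.
move=> hB; rewrite /PP tr_tprod_rank1 (bigD1 j) //= big1 ?mulr1.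
  by rewrite /uu eqxx.
by move=> k /negbTE hk; rewrite /uu hk hB.
Qed.

Lemma PP_perm phi (s : 'S_N.+1) :
  tperm_op R D s *m SS phi *m adj (tperm_op R D s) = SS phi.
Proof.
rewrite /SS mulmx_sumr mulmx_suml.
under eq_bigr do rewrite tperm_tprod.
rewrite (reindex_inj (@perm_inj _ s)) /=; apply: eq_bigr => j _.
rewrite /PP; f_equal; apply: funext => k.
by rewrite /uu (inj_eq (@perm_inj _ s)).
Qed.

Lemma PP_psd phi j : psd (PP phi j).
Proof. by rewrite /PP tprod_rank1; apply: psd_rank1. Qed.

Lemma SS_psd phi : psd (SS phi).
Proof. by apply: psd_sum => j; apply: PP_psd. Qed.


Section Eig.
Variables (phi : 'cV[C]_D) (a : C).
Hypothesis hphi : Om *m phi = a *: phi.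
Hypothesis horth : adj psi *m phi = 0.

Lemma q_phi_Om : q Om phi = a * q 1 phi.
Proof. by rewrite /q -mulmxA hphi -scalemxAr mxE mulmx1. Qed.

Lemma q_phi_P : q (psi *m adj psi) phi = 0.
Proof. by rewrite /q mulmxA -mulmxA horth mulmx0 mxE. Qed.

Lemma tr_sum_PP (B : 'I_N.+1 -> 'M[C]_D) :
  (forall k, q (B k) psi = 1) ->
  \tr (tprod B *m SS phi) = \sum_(j < N.+1) q (B j) phi.
Proof.
move=> hB; rewrite /SS mulmx_sumr linear_sum /=.
by apply: eq_bigr => j _; rewrite tr_PP.
Qed.

Lemma p_SS : \tr (OmN_tens N Om 1 *m SS phi) = a * q 1 phi *+ N + q 1 phi.
Proof.
rewrite /OmN_tens tr_sum_PP; last by move=> k; case: ifP => _; [exact: q_psi_Om | exact: q_psi_1].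
rewrite big_ord_recr /= ltnn; congr (_ + _).
rewrite (eq_bigr (fun _ => a * q 1 phi)); last by move=> j _; rewrite /= ltn_ord q_phi_Om.
by rewrite sumr_const card_ord.
Qed.

Lemma f_SS : \tr (OmN_tens N Om (psi *m adj psi) *m SS phi) = a * q 1 phi *+ N.
Proof.
rewrite /OmN_tens tr_sum_PP; last by move=> k; case: ifP => _; [exact: q_psi_Om | exact: q_psi_P].
rewrite big_ord_recr /= ltnn q_phi_P addr0.
rewrite (eq_bigr (fun _ => a * q 1 phi)); last by move=> j _; rewrite /= ltn_ord q_phi_Om.
by rewrite sumr_const card_ord.
Qed.

Lemma tr_SS : \tr (SS phi) = q 1 phi *+ N.+1.
Proof.
rewrite /SS linear_sum /=.
rewrite (eq_bigr (fun _ => q 1 phi)); first by rewrite sumr_const card_ord.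
move=> j _; rewrite /PP tprod_tr (bigD1 j) //= big1 ?mulr1.
  by rewrite -[X in \tr X]mul1mx tr_rank1 /uu eqxx.
by move=> k /negbTE hk; rewrite -[X in \tr X]mul1mx tr_rank1 /uu hk q_psi_1.
Qed.
End Eig.
End Main.

Lemma adj0 m n : adj (0 : 'M[C]_(m, n)) = 0.
Proof. by apply/matrixP => i j; rewrite !mxE conjC0. Qed.

Lemma eig_col D (Om : 'M[C]_D) a : adj Om = Om -> eigenvalue Om a ->
  exists2 phi : 'cV[C]_D, phi != 0 & Om *m phi = a^* *: phi.
Proof.
move=> hh /eigenvalueP [v hv nz]; exists (adj v).
  by apply: contra nz => /eqP h; rewrite -(adjK v) h adj0.
by rewrite -{1}hh -adj_mul hv adjZ.
Qed.

Lemma eig_orth D (Om : 'M[C]_D) (psi phi : 'cV[C]_D) b : adj Om = Om -> Om *m psi = psi ->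
  Om *m phi = b *: phi -> b != 1 -> adj psi *m phi = 0.
Proof.
move=> hh hp hphi hb.
have e1 : adj psi *m Om = adj psi by rewrite -{1}hh -adj_mul hp.
have : (1 - b) *: (adj psi *m phi) = 0.
  by rewrite scalerBl scale1r scalemxAr -hphi mulmxA e1 subrr.
by move/eqP; rewrite scalemx_eq0 subr_eq0 eq_sym (negbTE hb) /= => /eqP.
Qed.

Lemma q1_gt0 D (phi : 'cV[C]_D) : phi != 0 -> 0 < q 1 phi.
Proof.
move=> nz; rewrite /q mulmx1 mxE.
have hge : forall i : 'I_D, true -> 0 <= adj phi 0 i * phi i 0.
  by move=> i _; rewrite adjE mulrC mul_conjC_ge0.
rewrite lt_def sumr_ge0 // andbT; apply/negP => /eqP h0.
move/negP: nz; apply; apply/eqP/matrixP => i j; rewrite ord1 mxE.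
have := psumr_eq0P hge h0 (i := i) isT; rewrite adjE mulrC => /eqP.
by rewrite mul_conjC_eq0 => /eqP.
Qed.
End H.

End Helpers.
Import Helpers.

Theorem lemma8 (R : realType) (D : nat) (psi : 'cV[R[i]]_D) (Om : 'M[R[i]]_D)
    (beta : R[i]) (N : nat) (delta : R) :
  (2 <= D)%N ->
  unit_vector psi ->
  verification_operator Om psi ->
  (* Omega is singular: its smallest eigenvalue is 0 *)
  eigenvalue Om 0 -> (forall a, eigenvalue Om a -> 0 <= a) ->
  (* beta is the second largest eigenvalue of Omega *)
  eigenvalue Om beta -> beta != 1 ->
  (forall a, eigenvalue Om a -> a != 1 -> a <= beta) ->
  (1 <= N)%N ->
  (N.+1%:R)^-1 <= RtoC delta ->
  RtoC delta <= (1 + N%:R * beta) / N.+1%:R ->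
  Fval N delta Om psi <= 1 - (N.+1%:R * delta)^-1.
Proof.
move=> hD hunit [hh _ _ hOm _] h0 hge hb hb1 _ hN hlo hhi.
rewrite /Defs.hermitian in hh.
set d := RtoC delta in hlo hhi *.
have N1 : (0 : R[i]) < N.+1%:R by rewrite ltr0n.
have N1' : (N.+1%:R : R[i]) != 0 by rewrite gt_eqF.
have Nn : (N%:R : R[i]) != 0 by rewrite pnatr_eq0 -lt0n.
have b0 : 0 <= beta := hge _ hb.
have bc : beta^* = beta by apply/CrealP; apply: ger0_real.
have [phi0 nz0 e0] := eig_col hh h0; rewrite conjC0 in e0.
have [phi1 nz1 e1] := eig_col hh hb; rewrite bc in e1.
have z1 : (0:R[i]) != 1 by rewrite eq_sym oner_neq0.
have o0 := eig_orth hh hOm e0 z1.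
have o1 := eig_orth hh hOm e1 hb1.
have n0p := q1_gt0 nz0; have n1p := q1_gt0 nz1.
have n0z : q 1 phi0 != 0 by rewrite gt_eqF.
have n1z : q 1 phi1 != 0 by rewrite gt_eqF.
have dlo : 1 <= N.+1%:R * d by rewrite -ler_pdivrMl // mulr1.
have dhi : N.+1%:R * d <= 1 + N%:R * beta by rewrite mulrC -ler_pdivlMr.
have dp : 0 < d by apply: lt_le_trans hlo; rewrite invr_gt0.
have dz : d != 0 by rewrite gt_eqF.
pose lam := if beta == 0 then 0 else (N.+1%:R * d - 1) / (N%:R * beta).
have hlam : lam * (N%:R * beta) = N.+1%:R * d - 1.
  rewrite /lam; case: eqP => [bz|/eqP bz].
    rewrite mul0r; apply/esym/eqP; rewrite subr_eq0 eq_le dlo andbT.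
    by move: dhi; rewrite bz mulr0 addr0.
  by rewrite divfK // mulf_neq0.
have lam0 : 0 <= lam.
  rewrite /lam; case: eqP => // /eqP bz; apply: divr_ge0; first by rewrite subr_ge0.
  by apply: mulr_ge0 => //; rewrite ler0n.
have lam1 : lam <= 1.
  rewrite /lam; case: eqP => [_|/eqP bz]; first exact: ler01.
  have Nb : 0 < N%:R * beta by rewrite mulr_gt0 ?ltr0n // lt_def bz b0.
  by rewrite ler_pdivrMr // mul1r lerBlDl.
pose c0 := (1 - lam) / (N.+1%:R * q 1 phi0).
pose c1 := lam / (N.+1%:R * q 1 phi1).
pose rho := c0 *: SS N psi phi0 + c1 *: SS N psi phi1.
have E1 : 1 + N%:R = N.+1%:R :> R[i] by rewrite addrC natr1.
have lin : forall M : 'M[R[i]]_(tdim D N.+1),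
    \tr (M *m rho) = c0 * \tr (M *m SS N psi phi0) + c1 * \tr (M *m SS N psi phi1).
  by move=> M; rewrite mulmxDr -!scalemxAr mxtraceD !mxtraceZ.
have pr : \tr (OmN_tens N Om 1 *m rho) = d.
  rewrite (lin (OmN_tens N Om 1)).
  have P0 := p_SS N hunit hOm e0.
  have P1 := p_SS N hunit hOm e1.
  rewrite P0 P1.
  have -> : c0 * (0 * q 1 phi0 *+ N + q 1 phi0) +
     c1 * (beta * q 1 phi1 *+ N + q 1 phi1) = (1 + lam * (N%:R * beta)) / N.+1%:R.
    rewrite /c0 /c1 -!(mulr_natr (_ * _) N); field.
    by rewrite E1 N1' n0z n1z.
  by rewrite hlam addrC subrK [N.+1%:R * d]mulrC mulfK.
have fr : \tr (OmN_tens N Om (psi *m adj psi) *m rho) = d - N.+1%:R^-1.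
  rewrite (lin (OmN_tens N Om (psi *m adj psi))).
  have F0 := f_SS N hunit hOm e0 o0.
  have F1 := f_SS N hunit hOm e1 o1.
  rewrite F0 F1.
  have -> : c0 * (0 * q 1 phi0 *+ N) +
     c1 * (beta * q 1 phi1 *+ N) = (lam * (N%:R * beta)) / N.+1%:R.
    rewrite /c0 /c1 -!(mulr_natr (_ * _) N); field.
    by rewrite E1 N1' n0z n1z.
  by rewrite hlam mulrBl [N.+1%:R * d]mulrC mulfK // mul1r.
have trr : \tr rho = 1.
  rewrite mxtraceD !mxtraceZ !(tr_SS N hunit) /c0 /c1.
  rewrite -(mulr_natr (q 1 phi0) N.+1) -(mulr_natr (q 1 phi1) N.+1); field.
  by rewrite E1 N1' n0z n1z.
have dloR : 1 <= N.+1%:R * delta.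
  rewrite -lecR; move: dlo; rewrite /d /RtoC.
  by rewrite rmorphM rmorph_nat.
have Cx : RtoC (1 - (N.+1%:R * delta)^-1) = (d - N.+1%:R^-1) / d.
  rewrite /RtoC rmorphB rmorph1 fmorphV rmorphM rmorph_nat -/(RtoC delta) -/d.
  by rewrite mulrBl divff // invfM.
rewrite /Fval.
set S := (X in inf X <= _).
have Sx : S (1 - (N.+1%:R * delta)^-1).
  exists rho; split.
  - split; last exact: trr.
    apply: psd_add; apply: psd_scale; try exact: SS_psd.
      rewrite /c0; apply: divr_ge0; first by rewrite subr_ge0.
      by apply: mulr_ge0; apply: ltW.
    rewrite /c1; apply: divr_ge0 => //.
    by apply: mulr_ge0; apply: ltW.
  - move=> s; rewrite /rho mulmxDr mulmxDl -!scalemxAr -!scalemxAl.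
    by rewrite !PP_perm.
  - by rewrite /p_rho pr.
  - by rewrite /f_rho /p_rho fr pr Cx.
case: (pselect (has_lbound S)) => hl.
  exact: ge_inf hl _ Sx.
rewrite inf_out; last by case.
rewrite subr_ge0 invf_le1 //.
by apply: lt_le_trans dloR.
Qed.
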